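(* For every $n > 3$, the set $\{d_n\}$ is not equidistributed.
   Context: A linear arrangement of $\{1,\ldots,n\}$ is a sequence $a_1\cdots a_n$ in which each of $1,\ldots,n$ appears exactly once. It contains the pattern $ij$ if $a_t=i$ and $a_{t+1}=j$ for some $t$; otherwise it avoids it. $\{d_n\}$ is the set of linear arrangements of $\{1,\ldots,n\}$ avoiding all of the patterns $12, 23, \ldots, (n-1)n$. For a set $X$ of linear arrangements of $\{1,\ldots,n\}$ and $i\in\{1,\ldots,n\}$, the class $X^{(i)}$ is the set of arrangements in $X$ whose first entry is $i$. $X$ is called equidistributed if it is partitioned into its nonempty classes and all nonempty classes $X^{(i)}$ have the same cardinality. *)

(* Defs.v *)
(* Linear arrangements of {1,...,n} are represented as
   sequences of naturals that are permutations of [:: 1; 2; ...; n]. *)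
From mathcomp Require Import all_boot.
Set Implicit Arguments. Unset Strict Implicit. Unset Printing Implicit Defensive.

Definition arrangement (n : nat) (s : seq nat) : bool := perm_eq s (iota 1 n).

Definition contains_pat (s : seq nat) (i j : nat) : bool :=
  has (fun t => (nth 0 s t == i) && (nth 0 s t.+1 == j)) (iota 0 (size s).-1).

Definition avoids_succ (n : nat) (s : seq nat) : bool :=
  all (fun i => ~~ contains_pat s i i.+1) (iota 1 n.-1).

(* The set {d_n}, as a duplicate-free list of all such arrangements. *)
Definition dset (n : nat) : seq (seq nat) :=
  [seq s <- permutations (iota 1 n) | avoids_succ n s].

Definition cls (X : seq (seq nat)) (i : nat) : seq (seq nat) :=
  [seq s <- X | head 0 s == i].

Definition equidistributed (n : nat) (X : seq (seq nat)) : Prop :=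
  forall i j, 1 <= i <= n -> 1 <= j <= n ->
    size (cls X i) != 0 -> size (cls X j) != 0 ->
    size (cls X i) = size (cls X j).

(* Main.v *)
Require Import Defs.
From mathcomp Require Import all_boot.
From mathcomp Require Import zify.

Lemma iota_succ m k : iota m.+1 k = map S (iota m k).
Proof. by rewrite -addn1 addnC iotaDl; apply: eq_map => x; rewrite add1n. Qed.

Lemma contains_cons2 a b t i j :
  contains_pat [:: a, b & t] i j = ((a == i) && (b == j)) || contains_pat (b :: t) i j.
Proof.
rewrite /contains_pat /= iota_succ has_map; congr orb.
Qed.

Lemma contains_short a i j : contains_pat [:: a] i j = false.
Proof. by []. Qed.

Fixpoint nosucc (s : seq nat) : bool :=
  match s with
  | a :: ((b :: _) as t) => (b != a.+1) && nosucc t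
  | _ => true
  end.

Lemma nosucc_cons x u :
  nosucc (x :: u) = ((u == [::]) || (head 0 u != x.+1)) && nosucc u.
Proof. by case: u. Qed.

Lemma avoids_nosucc n s : all (fun x => 0 < x <= n) s -> avoids_succ n s = nosucc s.
Proof.
elim: s => [|a t IH]; first by move=> _; rewrite /avoids_succ; apply/allP.
case: t IH => [|b t] IH.
  by move=> _; rewrite /avoids_succ; apply/allP => i _; rewrite contains_short.
move=> /= /andP[/andP[a0 an] Hall].
have -> : avoids_succ n [:: a, b & t] =
   all (fun i => ~~ ((a == i) && (b == i.+1))) (iota 1 n.-1) && avoids_succ n (b :: t).
  rewrite /avoids_succ -all_predI; apply: eq_all => i /=.
  by rewrite contains_cons2 negb_or.
rewrite IH //; congr andb.
move: Hall => /= /andP[/andP[b0 bn] _].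
apply/allP/idP => [H | H i _].
  apply/negP => /eqP Eb.
  have : a \in iota 1 n.-1 by rewrite mem_iota; lia.
  by move=> /H; rewrite eqxx Eb eqxx.
by apply/negP => /andP[/eqP Ea /eqP Eb]; subst; rewrite eqxx in H.
Qed.

Lemma nosucc_map_pred t : all (fun x => 0 < x) t -> nosucc (map predn t) = nosucc t.
Proof.
elim: t => [|a t IH] //.
case: t IH => [|b t] IH // /andP[a0 Hbt].
rewrite map_cons nosucc_cons IH // [in RHS]nosucc_cons; congr andb.
move: Hbt => /andP[b0 _] /=; clear IH.
by case: a a0 => // a _; case: b b0.
Qed.

Lemma head_rev_iota a k : head 0 (rev (iota a k.+1)) = a + k.
Proof. by rewrite -addn1 iotaD cats1 rev_rcons. Qed.

Lemma nosucc_rev_iota a k : nosucc (rev (iota a k)).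
Proof.
elim: k => [|k IH] //.
rewrite -addn1 iotaD cats1 rev_rcons nosucc_cons IH andbT.
case: k IH => [|k] IH //=.
by rewrite head_rev_iota; apply/orP; right; lia.
Qed.

Lemma mem_cls n i s :
  (s \in cls (dset n) i) = [&& head 0 s == i, avoids_succ n s & perm_eq s (iota 1 n)].
Proof. by rewrite /cls /dset !mem_filter mem_permutations. Qed.

Lemma perm_range n s : perm_eq s (iota 1 n) -> all (fun x => 0 < x <= n) s.
Proof.
move=> /perm_all ->; apply/allP => x; rewrite mem_iota; lia.
Qed.

Arguments perm_range {n s}.

Lemma in_cls n i s : head 0 s = i -> perm_eq s (iota 1 n) -> nosucc s ->
  s \in cls (dset n) i.
Proof.
move=> Hh Hp Hn; rewrite mem_cls Hh eqxx Hp avoids_nosucc ?Hn //.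
exact: perm_range.
Qed.

Lemma cls_uniq n i : uniq (cls (dset n) i).
Proof. by rewrite !filter_uniq // permutations_uniq. Qed.

Lemma iota_last n : iota 1 n.+1 = rcons (iota 1 n) n.+1.
Proof. rewrite -cats1; have := iotaD 1 n 1; rewrite addn1 => ->; by rewrite add1n. Qed.

Theorem proposition4p11 (n : nat) : 3 < n -> ~ equidistributed n (dset n).
Proof.
move=> n3 Heq.
set A := cls (dset n) 1; set B := cls (dset n) n.
have [n' En] : exists n', n = n'.+1 by (exists n.-1; lia).
have Eio : iota 1 n = 1 :: iota 2 n' by rewrite En.
have Hsh : map predn (iota 2 n') = iota 1 n'.
  by rewrite iota_succ -map_comp map_id_in.
have HA : forall s, s \in A -> exists t, [/\ s = 1 :: t, perm_eq t (iota 2 n'),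
          all (fun x => 0 < x) t & nosucc (1 :: t)].
  move=> s; rewrite mem_cls => /and3P[Hh Hav Hp].
  case: s Hh Hav Hp => [|a t] //= /eqP -> Hav Hp.
  exists t; have Hp' : perm_eq t (iota 2 n') by rewrite Eio perm_cons in Hp.
  split => //.
    by move: (perm_range Hp) => /= /andP[_]; apply: sub_all => x /andP[].
  by move: Hav; rewrite (avoids_nosucc _ _ (perm_range Hp)).
pose f (s : seq nat) := n :: map predn (behead s).
have HfB : forall s, s \in A -> f s \in B.
  move=> s /HA [t [-> Hp Hpos Hns]]; apply: in_cls => //.
    rewrite /f /= En iota_last -cats1 perm_sym perm_catC cat1s perm_cons.
    by rewrite -Hsh perm_sym perm_map // perm_sym.
  have tn : size t = n' by rewrite (perm_size Hp) size_iota.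
  case: t tn Hp Hpos Hns => [|c t] tn Hp Hpos Hns; first by [].
  rewrite /f [behead _]/= nosucc_cons nosucc_map_pred //.
  rewrite nosucc_cons in Hns; case/andP: Hns => _ ->; rewrite andbT /=.
  have : c <= n.
    have := perm_range (n:=n) (s := 1 :: c :: t).
    rewrite Eio perm_cons => /(_ Hp) /= /and3P[_ /andP[_ ->] _] //.
  lia.
have Hinj : {in A &, injective f}.
  move=> s1 s2 /HA [t1 [-> _ P1 _]] /HA [t2 [-> _ P2 _]] [] E.
  have K : forall t, all (fun x => 0 < x) t -> map S (map predn t) = t.
    move=> t /allP Ht; rewrite -map_comp map_id_in // => x /Ht /=; lia.
  by rewrite -(K _ P1) E K.
pose e := n :: 1 :: rev (iota 2 (n - 2)).
have HeB : e \in B.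
  have [k Ek] : exists k, n = k.+2 by (exists (n - 2); lia).
  apply: in_cls => //.
    rewrite /e Ek subn2 (iota_last k.+1) perm_sym perm_rcons perm_cons.
    by rewrite [iota 1 k.+1]/= perm_cons perm_sym perm_rev.
  change ((1 != n.+1) && nosucc (1 :: rev (iota 2 (n-2)))).
  rewrite nosucc_cons nosucc_rev_iota andbT.
  have [k' Ek'] : exists k', n - 2 = k'.+1 by (exists (n - 3); lia).
  rewrite Ek' head_rev_iota; apply/andP; split; [lia | apply/orP; right; lia].
have HeA : e \notin map f A.
  apply/mapP => -[s /HA [t [-> _ _ Hns]]].
  rewrite /f /e /= => -[].
  case: t Hns => [|c t] // Hns [] Ec _.
  by case: c Ec Hns => [|[|[|c]]].
have HA1 : (1 :: rev (iota 2 n')) \in A.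
  apply: in_cls => //.
    by rewrite Eio perm_cons perm_rev.
  rewrite nosucc_cons nosucc_rev_iota andbT.
  have [k' Ek'] : exists k', n' = k'.+1 by (exists n'.-1; lia).
  rewrite Ek' head_rev_iota; apply/orP; right; lia.
have Hsz : (size A).+1 <= size B.
  rewrite -(size_map f) -/(size (e :: map f A)); apply: uniq_leq_size.
    by rewrite /= HeA map_inj_in_uniq // cls_uniq.
  by move=> x; rewrite inE => /orP[/eqP -> //|/mapP[s Hs ->]]; apply: HfB.
have := Heq 1 n.
rewrite -/A -/B => H.
have Hne : size A != 0 by apply/eqP => /size0nil E; rewrite E in HA1.
have Hne' : size B != 0 by move: Hsz; case: (size B).
have := H ltac:(lia) ltac:(lia) Hne Hne'.
lia.
Qed.
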